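(* Let $p\geq 5$ be a prime and let $\mathcal{A}$ be a cyclotomic $S$-ring over $C_{3p}=C_3\times C_p$ such that $\mathrm{rk}(\mathcal{A}_{C_p})=2$ and $\mathcal{A}\neq\mathcal{A}_{C_3}\otimes\mathcal{A}_{C_p}$. Then $\mathcal{A}=\mathcal{A}_0$.
   Context: For a finite group $G$ with identity $e$ and $X\subseteq G$ write $\underline{X}=\sum_{x\in X}x$. An $S$-ring over $G$ is a subring $\mathcal{A}\subseteq\mathbb{Z}G$ spanned by $\{\underline{X}:X\in\mathcal{S}(\mathcal{A})\}$ for a partition $\mathcal{S}(\mathcal{A})$ of $G$ (basic sets) containing $\{e\}$ and closed under inversion; $\mathrm{rk}(\mathcal{A})=|\mathcal{S}(\mathcal{A})|$. A subgroup $U$ with $\underline{U}\in\mathcal{A}$ is an $\mathcal{A}$-subgroup, and then $\mathcal{A}_U$ is the $S$-ring over $U$ whose basic sets are the basic sets of $\mathcal{A}$ contained in $U$. For $K\leq\mathrm{Aut}(G)$, $\mathrm{Cyc}(K,G)$ is the $S$-ring whose basic sets are the orbits of $K$ on $G$; such $S$-rings are called cyclotomic. If $\mathcal{A}_1,\mathcal{A}_2$ are $S$-rings over $G_1,G_2$, the tensor product $\mathcal{A}_1\otimes\mathcal{A}_2$ is the $S$-ring over $G_1\times G_2$ with basic sets $X_1\times X_2$, $X_i\in\mathcal{S}(\mathcal{A}_i)$. Identify $\mathrm{Aut}(C_{3p})=\mathrm{Aut}(C_3)\times\mathrm{Aut}(C_p)$. Let $W_0$ be the subgroup of $\mathrm{Aut}(C_3)\times\mathrm{Aut}(C_p)$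 consisting of pairs $(\alpha,\beta)$ such that $\alpha$ is trivial if and only if $\beta$ lies in the subgroup of index $2$ of $\mathrm{Aut}(C_p)$ (the unique nontrivial subdirect product of $\mathrm{Aut}(C_3)$ and $\mathrm{Aut}(C_p)$), and let $\mathcal{A}_0=\mathrm{Cyc}(W_0,C_{3p})$. *)

(* Defs.v *)
From mathcomp Require Import all_boot all_fingroup all_solvable.
Set Implicit Arguments. Unset Strict Implicit. Unset Printing Implicit Defensive.
Local Open Scope group_scope.

(* Basic sets of the cyclotomic S-ring Cyc(K,G): the orbits of K <= Aut(G) on G
   (automorphisms of G are represented as permutations of gT, as in Aut G). *)
Definition cyc_basic (gT : finGroupType) (K : {set {perm gT}}) (G : {set gT})
  : {set {set gT}} := [set orbit 'P K x | x in G].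

Definition restr_basic (gT : finGroupType) (S : {set {set gT}}) (U : {set gT})
  : {set {set gT}} := [set X in S | X \subset U].

(* Tensor product over an internal direct product G = G1 x G2: the basic set
   X1 x X2 is identified with the set product X1 * X2 (bijective image). *)
Definition tensor_basic (gT : finGroupType) (S1 S2 : {set {set gT}})
  : {set {set gT}} := [set X1 * X2 | X1 in S1, X2 in S2].

(* W_0 <= Aut(G) for G = C3 x Cp: automorphisms s whose restriction to C3 is
   trivial iff their restriction to Cp lies in H, the subgroup of index 2 of
   Aut(Cp). *)
Definition W0 (gT : finGroupType) (G C3 Cp : {set gT}) (H : {set {perm gT}})
  : {set {perm gT}} :=
  [set s in Aut G | (restr_perm C3 s == 1) == (restr_perm Cp s \in H)].

(* Main.v *)
Require Import Defs.
From mathcomp Require Import all_boot all_fingroup all_solvable.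
Set Implicit Arguments. Unset Strict Implicit. Unset Printing Implicit Defensive.
Local Open Scope group_scope.

Lemma char_astabsP (gT : finGroupType) (G H : {group gT}) (a : {perm gT}) :
  H \char G -> a \in Aut G -> a \in 'N(H | 'P).
Proof.
move=> /andP[sHG /forall_inP chH] Aa.
have sub := chH a Aa.
rewrite !inE /=; apply/subsetP=> x Hx; rewrite !inE /= apermE.
by apply: (subsetP sub); apply: imset_f.
Qed.

Lemma two_elt (T : finGroupType) (A : {group T}) x y :
  #|A| = 2 -> x \in A -> y \in A -> x != 1 -> y != 1 -> x = y.
Proof.
move=> cA xA yA x1 y1; apply/eqP; apply: contraT => nxy.
have: #|[set x; y]| <= #|A :\ 1|.
  by apply: subset_leq_card; apply/subsetP=> z; rewrite !inE => /orP[]/eqP->; rewrite ?x1 ?y1.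
by rewrite cards2 nxy -(leq_add2l (1 \in A)) -cardsD1 group1 cA.
Qed.

Lemma decomp (gT : finGroupType) (G C3 Cp : {group gT}) :
  C3 \subset G -> Cp \subset G -> coprime #|C3| #|Cp| -> #|G| = (#|C3| * #|Cp|)%N ->
  forall x, x \in G -> exists2 u, u \in C3 & exists2 v, v \in Cp & x = u * v.
Proof.
move=> s3 sp co cG x Gx.
have e : C3 * Cp = G.
  apply/eqP; rewrite eqEcard mul_subG //= TI_cardMg ?coprime_TIg // cG //.
rewrite -e in Gx; case/mulsgP: Gx => u v Hu Hv ->.
by exists u => //; exists v.
Qed.

Lemma Aut_eq2 (gT : finGroupType) (G C3 Cp : {group gT}) (s t : {perm gT}) :
  (forall x, x \in G -> exists2 u, u \in C3 & exists2 v, v \in Cp & x = u * v) ->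
  C3 \subset G -> Cp \subset G ->
  s \in Aut G -> t \in Aut G -> {in C3, s =1 t} -> {in Cp, s =1 t} -> s = t.
Proof.
move=> dec s3 sp As At e3 ep; apply: (eq_Aut As At) => x Gx.
have [u Hu [v Hv ->]] := dec x Gx.
have Gu := subsetP s3 u Hu; have Gv := subsetP sp v Hv.
rewrite (morphicP (Aut_morphic As)) // (morphicP (Aut_morphic At)) //.
by rewrite e3 ?ep.
Qed.

Lemma orbit_subC (gT : finGroupType) (G C : {group gT}) (K : {group {perm gT}}) u :
  K \subset Aut G -> C \char G -> u \in C -> orbit 'P K u \subset C.
Proof.
move=> KA chC Cu; apply/subsetP=> y /orbitP[k Kk <-].
have := char_astabsP chC (subsetP KA k Kk).
rewrite !inE /= => /subsetP /(_ u Cu); by rewrite inE.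
Qed.

Lemma orbit_mul (gT : finGroupType) (G C3 Cp : {group gT}) (K : {group {perm gT}}) u v :
  K \subset Aut G -> C3 \subset G -> Cp \subset G ->
  (forall k1 k2, k1 \in K -> k2 \in K ->
     exists2 k, k \in K & {in C3, k =1 k1} /\ {in Cp, k =1 k2}) ->
  u \in C3 -> v \in Cp ->
  orbit 'P K (u * v) = orbit 'P K u * orbit 'P K v.
Proof.
move=> KA s3 sp HT Hu Hv.
have Gu := subsetP s3 u Hu; have Gv := subsetP sp v Hv.
apply/setP=> y; apply/idP/idP.
  case/orbitP=> k Kk <-; rewrite /= apermE.
  rewrite (morphicP (Aut_morphic (subsetP KA k Kk))) //.
  by apply: mem_mulg; rewrite -[k _]apermE; apply: mem_orbit.
case/mulsgP=> y1 y2 /orbitP[k1 K1 <-] /orbitP[k2 K2 <-] ->.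
have [k Kk [e1 e2]] := HT k1 k2 K1 K2.
apply/orbitP; exists k => //=; rewrite !apermE.
by rewrite (morphicP (Aut_morphic (subsetP KA k Kk))) // e1 // e2.
Qed.

Lemma tensor_ok (gT : finGroupType) (G C3 Cp : {group gT}) (K : {group {perm gT}}) :
  K \subset Aut G -> C3 \char G -> Cp \char G ->
  (forall x, x \in G -> exists2 u, u \in C3 & exists2 v, v \in Cp & x = u * v) ->
  (forall k1 k2, k1 \in K -> k2 \in K ->
     exists2 k, k \in K & {in C3, k =1 k1} /\ {in Cp, k =1 k2}) ->
  cyc_basic K G = tensor_basic (restr_basic (cyc_basic K G) C3)
                                (restr_basic (cyc_basic K G) Cp).
Proof.
move=> KA ch3 chp dec HT.
have s3 := char_sub ch3; have sp := char_sub chp.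
apply/setP=> X; apply/idP/idP.
  case/imsetP=> x Gx ->; apply/imset2P; have [u Hu [v Hv ->]] := dec x Gx.
  exists (orbit 'P K u) (orbit 'P K v); last exact: (orbit_mul KA s3 sp HT Hu Hv).
    rewrite !inE (orbit_subC KA ch3 Hu) andbT; apply/imsetP; exists u => //.
    exact: (subsetP s3).
  rewrite !inE (orbit_subC KA chp Hv) andbT; apply/imsetP; exists v => //.
  exact: (subsetP sp).
case/imset2P=> X1 X2; rewrite !inE => /andP[/imsetP[u Gu ->] s1] /andP[/imsetP[v Gv ->] s2] ->.
have Hu : u \in C3 by apply: (subsetP s1); apply: orbit_refl.
have Hv : v \in Cp by apply: (subsetP s2); apply: orbit_refl.
apply/imsetP; exists (u * v); first by rewrite groupM.
by rewrite (orbit_mul KA s3 sp HT Hu Hv).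
Qed.

Lemma restr_eq (T : finType) (S : {set T}) (s t : {perm T}) :
  s \in 'N(S | 'P) -> t \in 'N(S | 'P) ->
  restr_perm S s = restr_perm S t -> {in S, s =1 t}.
Proof. by move=> Ns Nt e x Sx; rewrite -(restr_permE Ns Sx) -(restr_permE Nt Sx) e. Qed.

Lemma restr_one (T : finType) (S : {set T}) (s : {perm T}) :
  s \in 'N(S | 'P) -> restr_perm S s = 1 -> {in S, s =1 id}.
Proof. by move=> Ns e x Sx; rewrite -(restr_permE Ns Sx) e perm1. Qed.

Lemma Aut1E (gT : finGroupType) (G : {group gT}) s : s \in Aut G -> s 1 = 1.
Proof. by move=> As; rewrite -(autmE As) morph1. Qed.

Unset Implicit Arguments.
Set Strict Implicit.

Theorem lemma3p1 (gT : finGroupType) (G C3 Cp : {group gT}) (p : nat)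
    (K H : {group {perm gT}}) :
  prime p -> 5 <= p ->
  cyclic G -> #|G| = (3 * p)%N ->
  C3 \subset G -> #|C3| = 3 -> Cp \subset G -> #|Cp| = p ->
  H \subset Aut Cp -> #|Aut Cp : H| = 2 ->
  K \subset Aut G ->
  #|restr_basic (cyc_basic K G) Cp| = 2 ->
  cyc_basic K G <> tensor_basic (restr_basic (cyc_basic K G) C3)
                                (restr_basic (cyc_basic K G) Cp) ->
  cyc_basic K G = cyc_basic (W0 G C3 Cp H) G.
Proof.
move=> pr p5 cycG cG s3 c3 sp cp sHA iH KA card2 ntens.
have ch3 : C3 \char G by rewrite sub_cyclic_char.
have chp : Cp \char G by rewrite sub_cyclic_char.
have co : coprime #|C3| #|Cp|.
  rewrite c3 cp prime_coprime // dvdn_prime2 //.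
  by apply/negP => /eqP e; rewrite -e in p5.
have dec : forall x, x \in G -> exists2 u, u \in C3 & exists2 v, v \in Cp & x = u * v.
  by apply: decomp s3 sp co _; rewrite cG c3 cp.
have A3 : #|Aut C3| = 2.
  have cy : cyclic C3 by apply: prime_cyclic; rewrite c3.
  by rewrite card_Aut_cyclic // c3 totient_prime.
have Ap : #|Aut Cp| = p.-1.
  have cy : cyclic Cp by apply: prime_cyclic; rewrite cp.
  by rewrite card_Aut_cyclic // cp totient_prime.
set r3 := restr_perm C3; set rp := restr_perm Cp.
have N3 s : s \in Aut G -> s \in 'N(C3 | 'P) by apply: char_astabsP.
have Np s : s \in Aut G -> s \in 'N(Cp | 'P) by apply: char_astabsP.
have r3A s : s \in Aut G -> r3 s \in Aut C3 by apply: Aut_restr_perm.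
have rpA s : s \in Aut G -> rp s \in Aut Cp by apply: Aut_restr_perm.
have KG k : k \in K -> k \in Aut G by apply: (subsetP KA).
have [b Cpb b1] : exists2 b, b \in Cp & b != 1.
  by apply/trivgPn; rewrite -cardG_gt1 cp prime_gt1.
have trans z : z \in Cp -> z != 1 -> exists2 k, k \in K & k b = z.
  move=> Cz z1.
  set O := fun x => orbit 'P K x.
  set R := restr_basic (cyc_basic K G) Cp.
  have inR x : x \in Cp -> O x \in R.
    move=> Cx; rewrite !inE (orbit_subC KA chp Cx) andbT; apply/imsetP; exists x => //.
    exact: (subsetP sp x Cx).
  have O1 x : x != 1 -> O x != O 1.
    move=> x1; apply/negP => /eqP e; have: x \in O 1 by rewrite -e orbit_refl.
    by case/orbitP=> k Kk; rewrite /= apermE (Aut1E (KG k Kk)) => e1; rewrite e1 eqxx in x1.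
  have eOb : O z = O b.
    apply/eqP; apply: contraT => ne.
    have: #|[set O z; O b]| <= #|R :\ O 1|.
      apply: subset_leq_card; apply/subsetP=> X; rewrite in_setU1 in_set1 => /orP[]/eqP->;
        by rewrite in_setD1 O1 ?inR.
    by rewrite cards2 ne -(leq_add2l (O 1 \in R)) -cardsD1 inR ?group1 // card2.
  have: z \in O b by rewrite -eOb orbit_refl.
  by case/orbitP=> k Kk; rewrite /= apermE => e; exists k.
have cardK : p.-1 <= #|K|.
  have: Cp :\ 1 \subset [set k b | k : {perm gT} in K].
    apply/subsetP=> z; rewrite in_setD1 => /andP[z1 Cz].
    by have [k Kk <-] := trans z Cz z1; apply: imset_f.
  move/subset_leq_card => le.
  apply: leq_trans (leq_imset_card (fun k : {perm gT} => k b) K).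
  apply: leq_trans le; have e := cardsD1 1 Cp; rewrite group1 cp /= add1n in e.
  by rewrite e.
have pt3 s t : s \in Aut G -> t \in Aut G -> r3 s = r3 t -> {in C3, s =1 t}.
  by move=> As At; apply: restr_eq; apply: N3.
have ptp s t : s \in Aut G -> t \in Aut G -> rp s = rp t -> {in Cp, s =1 t}.
  by move=> As At; apply: restr_eq; apply: Np.
have r3M s t : s \in Aut G -> t \in Aut G -> r3 (s * t) = r3 s * r3 t.
  by move=> As At; rewrite /r3 morphM ?N3.
have rpM s t : s \in Aut G -> t \in Aut G -> rp (s * t) = rp s * rp t.
  by move=> As At; rewrite /rp morphM ?Np.
have r3V s : s \in Aut G -> r3 s^-1 = (r3 s)^-1.
  by move=> As; rewrite /r3 morphV ?N3.
have rpV s : s \in Aut G -> rp s^-1 = (rp s)^-1.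
  by move=> As; rewrite /rp morphV ?Np.
have [allt|allt] := boolP [forall k in K, r3 k == 1].
  exfalso; apply: ntens; apply: tensor_ok KA ch3 chp dec _.
  move=> k1 k2 K1 K2; exists k2 => //; split => // u Hu.
  have e1 := eqP (forall_inP allt k1 K1); have e2 := eqP (forall_inP allt k2 K2).
  by rewrite (restr_one (N3 _ (KG _ K2)) e2 Hu) (restr_one (N3 _ (KG _ K1)) e1 Hu).
have [exk|exk] := boolP [exists k in K, (rp k == 1) && (r3 k != 1)].
  case/exists_inP: exk => c Kc /andP[/eqP rpc r3c].
  exfalso; apply: ntens; apply: tensor_ok KA ch3 chp dec _.
  move=> k1 k2 K1 K2.
  have Ac := KG _ Kc; have A2 := KG _ K2; have A1 := KG _ K1.
  have [e|ne] := eqVneq (r3 k2) (r3 k1).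
    by exists k2 => //; split => //; apply: pt3.
  have Ac2 : c * k2 \in Aut G by rewrite groupM.
  exists (c * k2); first by rewrite groupM.
  split.
    apply: pt3 => //; rewrite r3M //.
    have ne' : r3 k1 * (r3 k2)^-1 != 1 by rewrite -eq_mulgV1 eq_sym.
    have e := two_elt A3 (r3A _ Ac) (groupM (r3A _ A1) (groupVr (r3A _ A2))) r3c ne'.
    by rewrite e mulgKV.
  by move=> v Hv; rewrite permM (restr_one (Np _ Ac) rpc Hv).
case/forall_inPn: allt => ks Kks r3ks.
have nex k : k \in K -> rp k = 1 -> r3 k = 1.
  move=> Kk e; apply/eqP; apply/negPn; apply: contra exk => ne.
  by apply/exists_inP; exists k => //; rewrite e eqxx ne.
have injK : {in K &, injective rp}.
  move=> k k' Kk Kk' e; have Ak := KG _ Kk; have Ak' := KG _ Kk'.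
  have Kd : k * k'^-1 \in K by rewrite groupM ?groupV.
  have Ak'V : k'^-1 \in Aut G by rewrite groupV.
  have d1 : rp (k * k'^-1) = 1 by rewrite rpM // rpV // e mulgV.
  have := nex _ Kd d1; rewrite r3M // r3V // => /eqP; rewrite -eq_mulgV1 => /eqP e3.
  by apply: (Aut_eq2 dec s3 sp Ak Ak'); [apply: pt3 | apply: ptp].
have KN3 : K \subset 'N(C3 | 'P) by apply/subsetP=> k Kk; apply: N3; apply: KG.
have KNp : K \subset 'N(Cp | 'P) by apply/subsetP=> k Kk; apply: Np; apply: KG.
pose K0 := (K :&: 'ker r3)%G.
have sK0 : K0 \subset K by apply: subsetIl.
have c3K : #|r3 @* K| = 2.
  apply/eqP; rewrite eqn_leq; apply/andP; split.
    rewrite -A3; apply: subset_leq_card.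
    exact: subset_trans (morphimS _ KA) (restr_perm_Aut s3).
  have: #|[set 1; r3 ks]| <= #|r3 @* K|.
    apply: subset_leq_card; apply/subsetP=> x; rewrite in_setU1 in_set1 => /orP[]/eqP->.
      exact: group1.
    by apply: mem_morphim => //; apply: (subsetP KN3).
  by rewrite cards2 eq_sym r3ks.
have cK : #|K| = (#|K0| * 2)%N.
  rewrite -c3K card_morphim (setIidPr KN3) -indexgI.
  by rewrite (Lagrange (subsetIl K ('ker r3))).
have cKp : #|K| = p.-1.
  apply/eqP; rewrite eqn_leq cardK andbT -Ap -(card_in_imset injK) -morphimEsub //.
  apply: subset_leq_card; exact: subset_trans (morphimS _ KA) (restr_perm_Aut sp).
have cH : (#|H| * 2)%N = p.-1 by rewrite -iH Lagrange // Ap.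
have HK0 : rp @* K0 = H.
  have cyA : cyclic (Aut Cp) by apply: Aut_prime_cyclic; rewrite cp.
  have sK0A : rp @* K0 \subset Aut Cp.
    exact: subset_trans (morphimS _ (subset_trans sK0 KA)) (restr_perm_Aut sp).
  apply/eqP; rewrite (eq_subG_cyclic cyA sK0A sHA).
  rewrite /rp /=; rewrite morphimEsub ?(subset_trans sK0 KNp) // card_in_imset; last first.
    by move=> x y /setIP[Kx _] /setIP[Ky _]; apply: injK.
  by rewrite -(eqn_pmul2r (_ : 0 < 2)) // -cK cKp cH.
have KW : K \subset W0 G C3 Cp H.
  apply/subsetP => k Kk; rewrite inE KG //= -HK0.
  have [e|ne] := eqVneq (r3 k) 1.
    have K0k : k \in K0 by rewrite in_setI Kk; apply/kerP => //; apply: (subsetP KN3).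
    have := mem_morphim [morphism of restr_perm Cp] (subsetP KNp _ Kk) K0k.
    by move=> ->.
  have: rp k \notin rp @* K0.
    apply/negP => /morphimP[k0 _ K0k0 e].
    move: K0k0; rewrite in_setI => /andP[Kk0 kk0].
    have ek := injK _ _ Kk Kk0 e.
    move/eqP: ne; rewrite ek; apply; exact: (kerP _ (subsetP KN3 _ Kk0) kk0).
  by move/negbTE->.
have injW : {in W0 G C3 Cp H &, injective rp}.
  move=> s t /setIdP[As es] /setIdP[At et] e.
  rewrite -/r3 -/rp in es et.
  have e3 : r3 s = r3 t.
    have: (r3 s == 1) = (r3 t == 1) by rewrite (eqP es) (eqP et) e.
    have [s1|s1] := eqVneq (r3 s) 1.
      by move=> /esym/eqP ->.
    by move=> /esym/negbT t1; exact: (two_elt A3 (r3A _ As) (r3A _ At) s1 t1).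
  by apply: (Aut_eq2 dec s3 sp As At); [apply: pt3 | apply: ptp].
have cW : #|W0 G C3 Cp H| <= #|K|.
  rewrite cKp -Ap -(card_in_imset injW); apply: subset_leq_card.
  apply/subsetP => _ /imsetP[s Ws ->]; apply: rpA.
  by move: Ws; rewrite inE => /andP[].
have eKW : (K : {set _}) = W0 G C3 Cp H by apply/eqP; rewrite eqEcard KW cW.
by rewrite eKW.
Qed.
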